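(* Let $\ell$ be an odd prime and fix $t\in\mathbb{Z}$. For $m\in\mathbb{Z}_{\ge1}$ define \[ \widetilde{\psi}_t^{(\ell)}(m) := \frac{1}{\varphi(m^2)} \sum_{\substack{n \bmod m^2\\ (n,m)=1}} \psi_{t^2 - 4\ell n}(m). \] Then the function $m\mapsto \widetilde{\psi}_t^{(\ell)}(m)$ is multiplicative.
   Context: For an integer $D=dL^2$ with $d$ a fundamental discriminant and $L\in\mathbb{Z}_{\ge0}$, $\psi_D(m):=\big(\tfrac{d}{m/(m,L)}\big)$ is a Kronecker symbol, with the convention $\psi_0(m)=1$. Here $\varphi$ is Euler's totient function, and the sum runs over residue classes $n$ modulo $m^2$ coprime to $m$. *)

(* Defs.v *)
From mathcomp Require Import all_boot all_order all_algebra.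
Set Implicit Arguments. Unset Strict Implicit. Unset Printing Implicit Defensive.
Import Order.TTheory GRing.Theory Num.Theory.
Local Open Scope ring_scope.

Definition sqfree_int (k : int) : bool :=
  (k != 0) && [forall p : 'I_(`|k|%N).+1, (1 < p)%N ==> ~~ ((p * p)%N %| `|k|%N)%N].

Definition fund_disc (d : int) : bool :=
  (modz d 4 == 1) && sqfree_int d
  || ((d \in dvdz 4) && (modz (divz d 4) 4 \in [:: 2; 3]) && sqfree_int (divz d 4)).

Definition legendre (a : int) (p : nat) : int :=
  let r := `|modz a p%:Z|%N in
  if r == 0%N then 0
  else if [exists x : 'I_p, ((x * x) %% p)%N == r] then 1 else -1.

Definition kron2 (a : int) : int :=
  if a \in dvdz 2 then 0
  else if (modz a 8 == 1) || (modz a 8 == 7) then 1 else -1.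

Definition kron_prime (a : int) (p : nat) : int :=
  if p == 2%N then kron2 a else legendre a p.

Definition kronecker (a : int) (n : nat) : int :=
  if n == 0%N then (if `|a|%N == 1%N then 1 else 0)
  else \prod_(p <- primes n) kron_prime a p ^+ logn p n.

(* For D = d L^2 (D != 0) with d fundamental, L >= 1 the (unique) conductor. *)
Definition disc_cond (D : int) : nat :=
  \max_(1 <= L < `|D|%N.+1 | ((L * L)%N %| `|D|%N)%N
                             && fund_disc (divz D (L * L)%N%:Z)) L.

Definition disc_fund (D : int) : int := divz D (disc_cond D * disc_cond D)%N%:Z.

Definition psi (D : int) (m : nat) : int :=
  if D == 0 then 1
  else kronecker (disc_fund D) (m %/ gcdn m (disc_cond D))%N.

Definition psit (l : nat) (t : int) (m : nat) : rat :=
  (totient (m * m))%:R^-1 *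
  \sum_(n < (m * m)%N | coprime n m) ((psi (t ^+ 2 - 4 * l%:Z * n%:Z) m)%:~R : rat).

(* Main.v *)
Require Import Defs.
From mathcomp Require Import all_boot all_order all_algebra zify ring lra.
Set Implicit Arguments. Unset Strict Implicit. Unset Printing Implicit Defensive.
Import Order.TTheory GRing.Theory Num.Theory.
Local Open Scope ring_scope.

Lemma not_sqfree k : k != 0 -> ~~ sqfree_int k ->
  exists q : nat, (1 < q)%N /\ ((q*q)%N%:Z %| k)%Z.
Proof.
move=> k0; rewrite /sqfree_int k0 /= => /forallPn [q].
rewrite negb_imply negbK => /andP[q1 qd]; exists q; split => //.
Qed.

Lemma oddsq (q : nat) : odd q -> exists r : int, (q*q)%N%:Z = 8 * r + 1.
Proof.
move=> oq; rewrite -[q](odd_double_half q) oq.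
set r := q./2.
exists ((r * (r+1))./2)%:Z.
have: ((r * (r + 1)) = ((r * (r+1))./2).*2)%N.
  by rewrite -{1}[(r * (r+1))%N](odd_double_half) oddM oddD /=; case: (odd r).
move=> h. lia.
Qed.

Lemma odd_of_sqdvd (q : nat) (D : int) : ((q*q)%N%:Z %| D)%Z -> (modz D 2 = 1) -> odd q.
Proof.
move=> /dvdzP [c ->] h; apply/negPn/negP => oq.
have : exists s, q = (s.*2)%N by exists q./2; rewrite -{1}(odd_double_half q) (negbTE oq).
move=> [s qs]; subst q. move: h. rewrite -!muln2. lia.
Qed.

Lemma exists_dec : forall n (D : int), (`|D| <= n)%N -> D != 0 ->
  (modz D 4 == 0) || (modz D 4 == 1) ->
  exists L d, (0 < L)%N /\ D = d * (L*L)%N%:Z /\ fund_disc d.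
Proof.
elim=> [|n IH] D Dn D0 D4.
  by move: Dn; rewrite leqn0 absz_eq0 (negbTE D0).
have [fD|nfD] := boolP (fund_disc D).
  by exists 1%N, D; split => //; rewrite mulr1.
have [c1|c2] := boolP ((modz D 4 == 0) && ((modz (divz D 4) 4 == 0) || (modz (divz D 4) 4 == 1))).
  move/andP: c1 => [/eqP h0 h1].
  have D1e : D = divz D 4 * 4 by lia.
  have [L [d [L0 [e f]]]] := IH (divz D 4) ltac:(lia) ltac:(lia) h1.
  exists (2 * L)%N, d; split; first lia; split => //.
  by rewrite D1e e -mulrA; congr (_ * _); rewrite -!PoszM; congr Posz; lia.
have [q [q1 qd oq]] : exists q : nat, [/\ (1 < q)%N, ((q*q)%N%:Z %| D)%Z & odd q].
  move: D4 => /orP [/eqP h0|/eqP h1].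
  - have h1 : (modz (divz D 4) 4 == 2) || (modz (divz D 4) 4 == 3).
      move: c2; rewrite h0 /=; lia.
    have nsq : ~~ sqfree_int (divz D 4).
      apply/negP => sq; move/negP: nfD; apply; apply/orP; right.
      rewrite sq andbT; apply/andP; split.
        by apply/dvdzP; exists (divz D 4); lia.
      by move: h1 => /orP [/eqP -> | /eqP ->].
    have [q [q1 qd]] := @not_sqfree (divz D 4) ltac:(lia) nsq.
    have oq : odd q.
      apply/negPn/negP => oq.
      have [s qs] : exists s, q = (s.*2)%N by exists q./2; rewrite -{1}(odd_double_half q) (negbTE oq).
      subst q; move/dvdzP: qd => [c qd]; move: h1 qd; rewrite -!muln2; lia.
    exists q; split => //.
    move/dvdzP: qd => [c qd]; apply/dvdzP; exists (4 * c).
    have -> : D = divz D 4 * 4 by lia.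
    by rewrite qd mulrC mulrA.
  - have nsq : ~~ sqfree_int D.
      apply/negP => sq; move/negP: nfD; apply; apply/orP; left.
      by rewrite sq h1 eqxx.
    have [q [q1 qd]] := not_sqfree D0 nsq.
    exists q; split => //; apply: odd_of_sqdvd qd _; lia.
move/dvdzP: qd => [D' De].
have [r hr] := oddsq oq.
have D'0 : D' != 0 by apply: contra D0 => /eqP h; rewrite De h mul0r.
have absD : (`|D| = `|D'| * (q*q))%N by rewrite De abszM.
have [L [d [L0 [e f]]]] := IH D' ltac:(nia) D'0 ltac:(move: D4; rewrite De hr; lia).
exists (q * L)%N, d; split; first lia; split => //.
by rewrite De e -mulrA; congr (_ * _); rewrite -!PoszM; congr Posz; lia.
Qed.

Lemma disc_spec D : D != 0 -> (modz D 4 == 0) || (modz D 4 == 1) ->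
  [/\ (0 < disc_cond D)%N, D = disc_fund D * (disc_cond D * disc_cond D)%N%:Z
   & fund_disc (disc_fund D)].
Proof.
move=> D0 D4.
have [L [d [L0 [e f]]]] := exists_dec (leqnn _) D0 D4.
have LL0 : (0 < L * L)%N by rewrite muln_gt0 L0.
have LN : (L < `|D|.+1)%N.
  rewrite ltnS; apply: (@leq_trans (L * L)); first by rewrite leq_pmulr.
  rewrite e abszM /=; apply: leq_pmull; rewrite absz_gt0; apply: contra D0.
  by move/eqP => h; rewrite e h mul0r.
pose P := fun L : nat => ((L * L)%N %| `|D|%N)%N && fund_disc (divz D (L * L)%N%:Z).
have PL : P L.
  rewrite /P e mulzK; last by rewrite -lt0n.
  by rewrite f andbT abszM /= dvdn_mull.
rewrite /disc_fund /disc_cond big_geq_mkord.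
have cp : (0 < #|[pred i : 'I_(`|D|.+1) | P i && (1 <= i)%N]|)%N.
  by apply/card_gt0P; exists (Ordinal LN); rewrite inE /= PL L0.
have [i0] := @eq_bigmax_cond _ _ (fun i : 'I_(`|D|.+1) => nat_of_ord i) cp.
rewrite inE /= => /andP [/andP [dv fi] i1] ->.
move: (nat_of_ord i0) dv fi i1 => k dv fi i1.
split => //.
have : ((k * k)%N%:Z %| D)%Z by rewrite dvdzE.
move=> /dvdzP [c ->].
by rewrite mulzK // -lt0n muln_gt0 i1.
Qed.

Lemma kron_range a n N : (0 < n)%N -> (n < N)%N ->
  kronecker a n = \prod_(p < N | prime p) kron_prime a p ^+ logn p n.
Proof.
move=> n0 nN; rewrite /kronecker (gtn_eqF n0) /=.
rewrite (bigID (fun p : 'I_N => (val p) \in primes n)) /=.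
rewrite [X in _ = _ * X]big1 ?mulr1; last first.
  move=> p /andP [_ pn]; rewrite (_ : logn p n = 0%N) //.
  by apply/eqP; rewrite -leqn0 leqNgt logn_gt0.
rewrite (eq_bigl (fun p : 'I_N => (val p) \in primes n)); last first.
  by move=> p /=; case pn: (_ \in primes n); rewrite ?andbF ?andbT //; move: pn; rewrite mem_primes => /andP[].
rewrite -(big_mkord (fun p => p \in primes n) (fun p => kron_prime a p ^+ logn p n)).
rewrite -[RHS]big_filter; apply: perm_big.
apply: uniq_perm; first exact: primes_uniq.
  by rewrite filter_uniq // iota_uniq.
move=> p; rewrite mem_filter mem_iota /= add0n.
case pn: (p \in primes n) => //=; symmetry.
move: pn; rewrite mem_primes => /and3P [_ _ pd].
by rewrite subn0; apply: leq_ltn_trans nN; apply: dvdn_leq.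
Qed.

Definition Hl (p k : nat) (D : int) : int :=
  if D == 0 then 1 else kron_prime (disc_fund D) p ^+ (k - minn k (logn p (disc_cond D))).

Lemma Hl0 p D : Hl p 0 D = 1.
Proof. by rewrite /Hl; case: ifP. Qed.

Lemma psi_prod D m N : (0 < m)%N -> (m < N)%N -> (D == 0) || (0 < disc_cond D)%N ->
  psi D m = \prod_(p < N | prime p) Hl p (logn p m) D.
Proof.
move=> m0 mN; rewrite /psi /Hl; case: eqP => [_ _|D0 /= L0].
  by rewrite big1.
have g0 : (0 < gcdn m (disc_cond D))%N by rewrite gcdn_gt0 m0.
have gm : (gcdn m (disc_cond D) <= m)%N by apply: dvdn_leq => //; apply: dvdn_gcdl.
rewrite (@kron_range _ _ N); last first.
- by apply: leq_ltn_trans mN; apply: leq_div.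
- by rewrite divn_gt0.
apply: eq_bigr => p _.
by rewrite logn_div ?dvdn_gcdl // logn_gcd.
Qed.

Lemma psiM D m1 m2 : (0 < m1)%N -> (0 < m2)%N -> coprime m1 m2 ->
  (D == 0) || (0 < disc_cond D)%N -> psi D (m1 * m2) = psi D m1 * psi D m2.
Proof.
move=> m10 m20 co h.
have mm0 : (0 < m1 * m2)%N by rewrite muln_gt0 m10.
rewrite !(@psi_prod D _ (m1 * m2).+1) //; last first.
- nia.
- nia.
rewrite -big_split /=; apply: eq_bigr => p pp.
rewrite lognM //.
have [l1|l1] := posnP (logn p m1).
  by rewrite l1 Hl0 mul1r.
have l2 : logn p m2 = 0%N.
  apply/eqP; rewrite -leqn0 leqNgt logn_gt0; apply/negP => pm2.
  move: l1; rewrite logn_gt0 => pm1.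
  move: co; rewrite mem_primes in pm1; rewrite mem_primes in pm2.
  move/and3P: pm1 => [pr _ d1]; move/and3P: pm2 => [_ _ d2].
  move=> co; have : (p %| gcdn m1 m2)%N by rewrite dvdn_gcd d1 d2. rewrite (eqP co) dvdn1 => /eqP p1.
  by rewrite p1 in pr.
by rewrite l2 Hl0 mulr1 addn0.
Qed.

Lemma crt_sum (a b : nat) (H : nat -> nat -> rat) : coprime a b -> (0 < a)%N -> (0 < b)%N ->
  \sum_(n < a * b) H (n %% a)%N (n %% b)%N = \sum_(x < a) \sum_(y < b) H x y.
Proof.
move=> co a0 b0.
have ab0 : (0 < a * b)%N by rewrite muln_gt0 a0.
rewrite pair_big /=.
pose h := fun i : 'I_(a * b) => (Ordinal (ltn_pmod i a0), Ordinal (ltn_pmod i b0)).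
pose g := fun xy : 'I_a * 'I_b => Ordinal (ltn_pmod (chinese a b xy.1 xy.2) ab0).
have hg : cancel h g.
  move=> i; apply: val_inj => /=.
  by rewrite -chinese_mod // modn_small.
have gh : cancel g h.
  move=> [x y]; congr pair; apply: val_inj => /=.
  - by rewrite modn_dvdm ?dvdn_mulr // chinese_modl // modn_small.
  - by rewrite modn_dvdm ?dvdn_mull // chinese_modr // modn_small.
rewrite (reindex h); last by apply: onW_bij; exists g.
by apply: eq_bigr.
Qed.

Lemma leg_ex c p : (0 < p)%N ->
  [exists x : 'I_p, ((x * x) %% p)%N == `|modz c p|%N] <->
  exists x : nat, ((x * x)%N%:Z = c %[mod p%:Z])%Z.
Proof.
move=> p0; have pz : p%:Z != 0 by rewrite -lt0n.
have cge : 0 <= modz c p by apply: modz_ge0.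
split.
  move=> /existsP [x /eqP h]; exists x.
  by rewrite modz_nat h gez0_abs.
move=> [x h]; apply/existsP; exists (Ordinal (ltn_pmod x p0)) => /=.
rewrite modnMm; apply/eqP.
have : (`|modz (x * x)%N p| = `|modz c p|)%N by rewrite h.
by rewrite modz_nat.
Qed.

Lemma pdvd_int (p : nat) (c : int) : (p%:Z %| c)%Z = (p %| `|c|)%N.
Proof. by rewrite dvdzE. Qed.

Lemma modz0E (c : int) (p : nat) : (`|modz c p| == 0)%N = (p %| `|c|)%N.
Proof.
rewrite absz_eq0 -pdvd_int; apply/idP/idP => [/eqP h|h].
  by apply/dvdz_mod0P.
by apply/eqP/dvdz_mod0P.
Qed.

Lemma mulz_congr (d A A' B B' : int) : (A = A' %[mod d])%Z -> (B = B' %[mod d])%Z ->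
  (A * B = A' * B' %[mod d])%Z.
Proof. by move=> h1 h2; rewrite -modzMm h1 h2 modzMm. Qed.

Lemma natmod (c : int) (p : nat) : (0 < p)%N -> exists y : nat, (y%:Z = c %[mod p%:Z])%Z.
Proof.
move=> p0; exists `|modz c p|%N.
rewrite gez0_abs ?modz_mod //; apply: modz_ge0; by rewrite -lt0n.
Qed.

Lemma leg_sq a (w : int) p : prime p -> ~~ (p%:Z %| w)%Z ->
  legendre (a * (w * w)) p = legendre a p.
Proof.
move=> pp pw; have p0 := prime_gt0 pp.
have pz : p%:Z != 0 by rewrite -lt0n.
rewrite /legendre.
have e1 : (`|modz (a * (w * w)) p| == 0)%N = (`|modz a p| == 0)%N.
  have pw' : (p %| `|w|)%N = false by rewrite -pdvd_int (negbTE pw).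
  by rewrite !modz0E !abszM !Euclid_dvdM // pw' !orbF.
have [u [v uv]] := Bezoutz w p.
have g1 : gcdz w p = 1.
  have : coprime `|w| p by rewrite coprime_sym prime_coprime // -pdvd_int.
  by rewrite /gcdz /= => /eqP ->.
rewrite g1 in uv.
have inv : ((u * w) = 1 %[mod p%:Z])%Z.
  have -> : u * w = (- v) * p%:Z + 1 by rewrite -uv; ring.
  by rewrite modzMDl.
have e2 : [exists x : 'I_p, ((x * x) %% p)%N == `|modz (a * (w * w)) p|%N] =
          [exists x : 'I_p, ((x * x) %% p)%N == `|modz a p|%N].
  apply/idP/idP => /(leg_ex _ p0) [x hx]; apply/(leg_ex _ p0).
  - have [y hy] := natmod (x%:Z * u) p0; exists y.
    rewrite PoszM (mulz_congr hy hy).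
    have -> : (x%:Z * u) * (x%:Z * u) = (x * x)%N%:Z * (u * u) by rewrite PoszM; ring.
    rewrite (mulz_congr hx (erefl (modz (u * u) p))).
    have -> : a * (w * w) * (u * u) = a * ((u * w) * (u * w)) by ring.
    by rewrite (mulz_congr (erefl (modz a p)) (mulz_congr inv inv)) !mulr1.
  - have [y hy] := natmod (x%:Z * w) p0; exists y.
    rewrite PoszM (mulz_congr hy hy).
    have -> : (x%:Z * w) * (x%:Z * w) = (x * x)%N%:Z * (w * w) by rewrite PoszM; ring.
    by rewrite (mulz_congr hx (erefl (modz (w * w) p))).
by rewrite e1 e2.
Qed.

Lemma leg_mod a b p : (a = b %[mod p%:Z])%Z -> legendre a p = legendre b p.
Proof. by rewrite /legendre => ->. Qed.

Lemma leg_zero a p : (p%:Z %| a)%Z -> legendre a p = 0.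
Proof. by move/dvdz_mod0P; rewrite /legendre => ->. Qed.

Lemma kron2_mod a b : (a = b %[mod 8])%Z -> kron2 a = kron2 b.
Proof.
move=> h; rewrite /kron2 h.
have -> : (a \in dvdz 2) = (b \in dvdz 2).
  apply/idP/idP; rewrite !unfold_in /=; lia.
by [].
Qed.

Lemma kron2_even a : (2 %| a)%Z -> kron2 a = 0.
Proof. by rewrite /kron2 => ->. Qed.

Definition vp (p : nat) (D : int) : nat := logn p `|D|.
Definition up (p : nat) (D : int) : int := divz D (p ^ vp p D)%N%:Z.

Lemma vpU p v u : prime p -> ~~ (p%:Z %| u)%Z ->
  vp p ((p ^ v)%N%:Z * u) = v /\ up p ((p ^ v)%N%:Z * u) = u.
Proof.
move=> pp pu.
have u0 : (0 < `|u|)%N.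
  rewrite absz_gt0; apply: contra pu => /eqP ->; exact: dvdz0.
have pv0 : (0 < p ^ v)%N by rewrite expn_gt0 prime_gt0.
have hv : vp p ((p ^ v)%N%:Z * u) = v.
  rewrite /vp abszM /= lognM // pfactorK // logn_coprime ?addn0 //.
  by rewrite prime_coprime // -pdvd_int.
split => //; rewrite /up hv mulrC mulzK //; by rewrite -lt0n.
Qed.

Lemma vp_decomp p D : prime p -> D != 0 ->
  D = (p ^ vp p D)%N%:Z * up p D /\ ~~ (p%:Z %| up p D)%Z.
Proof.
move=> pp D0.
have D0' : (0 < `|D|)%N by rewrite absz_gt0.
have dv : ((p ^ vp p D)%N%:Z %| D)%Z by rewrite dvdzE /= pfactor_dvdnn.
have De : D = (p ^ vp p D)%N%:Z * up p D by rewrite mulrC divzK.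
split => //; apply/negP => /dvdzP [c hc].
have : ((p ^ (vp p D).+1)%N %| `|D|)%N.
  have -> : `|D|%N = (p ^ vp p D * (`|c| * p))%N by rewrite {1}De hc !abszM.
  by rewrite expnSr mulnCA dvdn_mull.
by rewrite pfactor_dvdn // /vp ltnn.
Qed.

Lemma core p b a d0 L' : prime p -> ~~ (p%:Z %| d0)%Z -> ~~ (p %| L')%N ->
  vp p (((p ^ b)%N%:Z * d0) * ((p ^ a * L') * (p ^ a * L'))%N%:Z) = (b + 2 * a)%N /\
  up p (((p ^ b)%N%:Z * d0) * ((p ^ a * L') * (p ^ a * L'))%N%:Z) = d0 * (L' * L')%N%:Z.
Proof.
move=> pp pd pL.
have -> : ((p ^ b)%N%:Z * d0) * ((p ^ a * L') * (p ^ a * L'))%N%:Z =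
          (p ^ (b + 2 * a))%N%:Z * (d0 * (L' * L')%N%:Z).
  by rewrite mul2n -addnn !expnD !PoszM; ring.
apply: vpU => //.
rewrite pdvd_int !abszM /= !Euclid_dvdM // -pdvd_int (negbTE pd) (negbTE pL) //.
Qed.

Lemma sqfree_nd k q : sqfree_int k -> (1 < q)%N -> ~~ ((q * q) %| `|k|)%N.
Proof.
rewrite /sqfree_int => /andP [k0 /forallP h] q1; apply/negP => qd.
have qle : (q < `|k|.+1)%N.
  rewrite ltnS; apply: (@leq_trans (q * q)); first by rewrite leq_pmull // ltnW.
  by apply: dvdn_leq => //; rewrite absz_gt0.
by have := h (Ordinal qle); rewrite /= q1 qd.
Qed.

Lemma sqfree_nz k : sqfree_int k -> k != 0.
Proof. by case/andP. Qed.

Lemma fd_odd p d : prime p -> p != 2%N -> fund_disc d ->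
  d != 0 /\ ~~ ((p * p)%N %| `|d|)%N.
Proof.
move=> pp p2 /orP [/andP [_ sq] | /andP [/andP [d4 _] sq]].
  by split; [apply: sqfree_nz | apply: sqfree_nd => //; apply: prime_gt1].
have de : d = divz d 4 * 4 by rewrite divzK.
split.
  by rewrite de mulf_neq0 // sqfree_nz.
apply/negP => h.
have : ((p * p) %| `|divz d 4|)%N.
  have co : coprime (p * p) 4.
    rewrite coprimeMl andbb (_ : 4 = 2 ^ 2)%N // coprimeXr //.
    by rewrite prime_coprime // dvdn_prime2.
  have ad : `|d|%N = (`|divz d 4| * 4)%N by rewrite {1}de abszM.
  by rewrite -(Gauss_dvdl _ co) -ad.
by apply/negP; apply: sqfree_nd => //; apply: prime_gt1.
Qed.

Lemma fd_2 d : fund_disc d ->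
  [\/ modz d 4 = 1, exists e, d = 4 * e /\ modz e 4 = 3 | exists e, d = 8 * e /\ modz e 2 = 1].
Proof.
move=> /orP [/andP [/eqP h _] | /andP [/andP [d4 hm] sq]].
  by constructor 1.
have e4 : d = 4 * divz d 4 by move: d4; rewrite unfold_in /=; lia.
move: hm; rewrite !inE => /orP [/eqP h2 | /eqP h3].
  constructor 3; exists (divz (divz d 4) 2); lia.
constructor 2; exists (divz d 4); lia.
Qed.

Definition lvL p D : nat := let v := vp p D in
  if p == 2%N then (if odd v then (v - 3)./2 else if modz (up p D) 4 == 1 then v./2 else (v./2).-1)
  else v./2.
Definition lkv p D : int := let v := vp p D in
  if odd v then 0 else if p == 2%N then (if modz (up p D) 4 == 1 then kron2 (up p D) else 0)
  else legendre (up p D) p.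

Lemma half_db b a : ((b + 2 * a)./2 = b./2 + a)%N.
Proof. by rewrite mul2n halfD odd_double andbF add0n doubleK. Qed.

Lemma local D d L p : prime p -> (0 < L)%N -> D = d * (L * L)%N%:Z -> fund_disc d ->
  logn p L = lvL p D /\ kron_prime d p = lkv p D.
Proof.
move=> pp L0 De fd.
set a := logn p L.
set L' := (L %/ p ^ a)%N.
have Le : L = (p ^ a * L')%N by rewrite mulnC divnK // pfactor_dvdnn.
have pL' : ~~ (p %| L')%N.
  apply/negP => h.
  have : (p ^ a.+1 %| L)%N.
    have -> : L = (p ^ a * L')%N by [].
    by rewrite expnSr; apply: dvdn_mul.
  by rewrite pfactor_dvdn // ltnn.
rewrite Le in De.
have [p2|p2] := eqVneq p 2%N.
- subst p.
  have [r hr] : exists r : int, (L' * L')%N%:Z = 8 * r + 1.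
    by apply: oddsq; move: pL'; rewrite dvdn2 negbK.
  have [h1 | [e [he h3]] | [e [he h3]]] := fd_2 fd.
  + have pd : ~~ ((2%N)%:Z %| d)%Z by apply/negP; rewrite unfold_in /=; lia.
    have De' : D = ((2 ^ 0)%N%:Z * d) * ((2 ^ a * L') * (2 ^ a * L'))%N%:Z by rewrite De mul1r.
    have [hv hu] := core 0 a pp pd pL'; rewrite -De' in hv hu.
    have hm : modz (up 2 D) 8 = modz d 8 by rewrite hu hr; lia.
    rewrite /lvL /lkv hv hu /= half_db add0n mul2n odd_double /=.
    have -> : modz (d * (L' * L')%N%:Z) 4 == 1 by rewrite hr; lia.
    by split => //; rewrite /kron_prime /=; apply: kron2_mod; rewrite -hu hm.
  + have pd : ~~ ((2%N)%:Z %| e)%Z by apply/negP; rewrite unfold_in /=; lia.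
    have De' : D = ((2 ^ 2)%N%:Z * e) * ((2 ^ a * L') * (2 ^ a * L'))%N%:Z by rewrite De he.
    have [hv hu] := core 2 a pp pd pL'; rewrite -De' in hv hu.
    rewrite /lvL /lkv hv hu /= half_db mul2n odd_double /=.
    have -> : modz (e * (L' * L')%N%:Z) 4 == 1 = false by rewrite hr; lia.
    split => //; rewrite /kron_prime /= kron2_even // he; apply: dvdz_mulr => //.
  + have pd : ~~ ((2%N)%:Z %| e)%Z by apply/negP; rewrite unfold_in /=; lia.
    have De' : D = ((2 ^ 3)%N%:Z * e) * ((2 ^ a * L') * (2 ^ a * L'))%N%:Z by rewrite De he.
    have [hv hu] := core 3 a pp pd pL'; rewrite -De' in hv hu.
    rewrite /lvL /lkv hv /= mul2n odd_double /=.
    split; first by rewrite addKn doubleK.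
    have h2d : (2 %| d)%Z by rewrite he; apply: dvdz_mulr.
    by rewrite /kron_prime /= kron2_even.
- have [d0 nd] := fd_odd pp p2 fd.
  have [pd|pd] := boolP ((p%:Z %| d)%Z); last first.
    have De' : D = ((p ^ 0)%N%:Z * d) * ((p ^ a * L') * (p ^ a * L'))%N%:Z by rewrite De mul1r.
    have [hv hu] := core 0 a pp pd pL'; rewrite -De' in hv hu.
    rewrite /lvL /lkv hv hu (negbTE p2) /= half_db add0n mul2n odd_double /=.
    by split => //; rewrite /kron_prime (negbTE p2) PoszM leg_sq // pdvd_int.
  move/dvdzP: pd => [d1 hd1].
  have pd1 : ~~ (p%:Z %| d1)%Z.
    apply/negP => /dvdzP [d2 hd2]; move/negP: nd; apply.
    by rewrite hd1 hd2 !abszM /= -mulnA dvdn_mull.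
  have De' : D = ((p ^ 1)%N%:Z * d1) * ((p ^ a * L') * (p ^ a * L'))%N%:Z by rewrite De hd1 expn1 [d1 * _]mulrC.
  have [hv hu] := core 1 a pp pd1 pL'; rewrite -De' in hv hu.
  rewrite /lvL /lkv hv (negbTE p2) /= add0n mul2n odd_double uphalf_double /=.
  split => //; rewrite /kron_prime (negbTE p2) leg_zero // hd1; apply: dvdz_mull; exact: dvdzz.
Qed.

Definition E p k D : int := if D == 0 then 1 else lkv p D ^+ (k - minn k (lvL p D)).

Lemma Hl_E p k D : prime p -> (modz D 4 == 0) || (modz D 4 == 1) -> Hl p k D = E p k D.
Proof.
move=> pp D4; rewrite /Hl /E; case: eqP => // /eqP D0.
have [L0 De fd] := disc_spec D0 D4.
by have [-> ->] := local pp L0 De fd.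
Qed.

Definition ep p k := if p == 2%N then (2 * k + 2)%N else (2 * k)%N.

Lemma E_big p k X : prime p -> ((p ^ ep p k)%N%:Z %| X)%Z -> E p k X = 1.
Proof.
move=> pp hX; rewrite /E; case: eqP => // /eqP X0.
have : (ep p k <= vp p X)%N by rewrite /vp -pfactor_dvdn // absz_gt0.
move=> hv.
suff -> : minn k (lvL p X) = k by rewrite subnn expr0.
apply/minn_idPl; move: hv; rewrite /lvL /ep.
case: ifP => _ /=; last lia.
case: ifP => ho; first lia.
case: ifP => _; lia.
Qed.

Lemma cong_add (u j : int) (p s t : nat) : (s <= t)%N ->
  ((u + j * (p ^ t)%N%:Z) = u %[mod (p ^ s)%N%:Z])%Z.
Proof.
move=> st; rewrite -(subnK st) expnD PoszM mulrA addrC modzMDl //.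
Qed.

Lemma E_per p k D D' : prime p -> (0 < k)%N ->
  ((p ^ ep p k)%N%:Z %| D' - D)%Z -> E p k D = E p k D'.
Proof.
move=> pp k0 hd.
have [hD|hD] := boolP ((p ^ ep p k)%N%:Z %| D)%Z.
  have hD' : ((p ^ ep p k)%N%:Z %| D')%Z.
    by have := rpredD hd hD; rewrite subrK.
  by rewrite !E_big.
have D0 : D != 0 by apply: contra hD => /eqP ->; exact: dvdz0.
have [De pu] := vp_decomp pp D0.
set v := vp p D in De.
set u := up p D in De pu.
have ve : (v < ep p k)%N.
  rewrite ltnNge; apply: contra hD => h.
  rewrite De; apply: dvdz_mulr; rewrite dvdzE /=.
  by rewrite dvdn_exp2l.
move/dvdzP: hd => [j hj].
have D'e : D' = (p ^ v)%N%:Z * (u + j * (p ^ (ep p k - v))%N%:Z).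
  have -> : D' = D + j * (p ^ ep p k)%N%:Z by rewrite -hj; ring.
  by rewrite {1}De -{1}(subnKC (ltnW ve)) expnD PoszM; ring.
have pu' : ~~ (p%:Z %| u + j * (p ^ (ep p k - v))%N%:Z)%Z.
  apply: contra pu => h.
  have : (p%:Z %| j * (p ^ (ep p k - v))%N%:Z)%Z.
    apply: dvdz_mull; rewrite dvdzE /=.
    by rewrite -{1}(expn1 p) dvdn_exp2l // subn_gt0.
  by move=> h2; have := rpredB h h2; rewrite addrK.
have [hv' hu'] := vpU v pp pu'.
rewrite -D'e in hv' hu'.
have D'0 : D' != 0.
  rewrite D'e mulf_neq0 //; first by rewrite -absz_gt0 /= expn_gt0 prime_gt0.
  by apply: contra pu' => /eqP ->; exact: dvdz0.
set u' := u + j * (p ^ (ep p k - v))%N%:Z in hu'.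
have cg : forall s, (s <= ep p k - v)%N -> (u' = u %[mod (p ^ s)%N%:Z])%Z.
  by move=> s hs; apply: cong_add.
rewrite /E (negbTE D0) (negbTE D'0) /lvL /lkv -/v hv' hu' -/u.
case: ifP => ho; first by [].
case: ifP => hp.
  move/eqP: hp => hp; subst p.
  have c4 : modz u' 4 = modz u 4.
    have h2 : (2 <= ep 2 k - v)%N.
      move: ve ho; rewrite /ep /=; clear; lia.
    by have := cg 2%N h2.
  rewrite c4; case: ifP => // h1.
  have [hv|hv] := leqP k v./2.
    by rewrite subnn !expr0.
  have c8 : modz u' 8 = modz u 8.
    have h3 : (3 <= ep 2 k - v)%N.
      move: ve hv ho; rewrite /ep /=; clear; lia.
    by have := cg 3%N h3.
  by rewrite (kron2_mod c8).
have c1 : (u' = u %[mod p%:Z])%Z.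
  have h1 : (1 <= ep p k - v)%N.
    move: ve; rewrite /ep hp; clear; lia.
  have := cg 1%N h1.
  by rewrite expn1.
by rewrite (leg_mod c1).
Qed.

Lemma disc_ok D : (modz D 4 == 0) || (modz D 4 == 1) -> (D == 0) || (0 < disc_cond D)%N.
Proof.
move=> D4; case: eqP => //= /eqP D0.
by have [] := disc_spec D0 D4.
Qed.

Lemma E0 p D : E p 0 D = 1.
Proof. by rewrite /E; case: ifP. Qed.

Lemma psi_per D D' m : (0 < m)%N ->
  (modz D 4 == 0) || (modz D 4 == 1) -> (modz D' 4 == 0) || (modz D' 4 == 1) ->
  ((4 * (m * m))%N%:Z %| D' - D)%Z -> psi D m = psi D' m.
Proof.
move=> m0 D4 D'4 hd.
rewrite !(@psi_prod _ m m.+1) //; try exact: disc_ok.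
apply: eq_bigr => p pp.
rewrite !Hl_E //.
have [k0|k0] := posnP (logn p m); first by rewrite k0 !E0.
apply: E_per => //.
apply: dvdz_trans hd; rewrite dvdzE /=.
have pk : (p ^ logn p m %| m)%N by apply: pfactor_dvdnn.
rewrite /ep; case: ifP => [/eqP p2|_].
  rewrite p2 in pk *.
  rewrite (_ : 2 * logn 2 m + 2 = 2 + (logn 2 m + logn 2 m))%N; last by lia.
  by rewrite !expnD; apply: dvdn_mul => //; apply: dvdn_mul.
rewrite mul2n -addnn expnD; apply: dvdn_mull; exact: dvdn_mul.
Qed.

Lemma D4 (t : int) (x : int) : (modz (t ^+ 2 - 4 * x) 4 == 0) || (modz (t ^+ 2 - 4 * x) 4 == 1).
Proof.
have h : modz (t ^+ 2) 4 = modz (modz t 4 * modz t 4) 4 by rewrite modzMm expr2.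
have : modz t 4 = 0 \/ modz t 4 = 1 \/ modz t 4 = 2 \/ modz t 4 = 3 by lia.
by case=> [e|[e|[e|e]]]; rewrite e in h; move: h => /= h; lia.
Qed.

Lemma coprime_modsq n m : coprime (n %% (m * m)) m = coprime n m.
Proof.
by rewrite -coprime_modl modn_dvdm ?dvdn_mull // coprime_modl.
Qed.

Lemma psi1 D : psi D 1 = 1.
Proof. by rewrite /psi; case: ifP => // _; rewrite gcd1n divnn /kronecker /= big_nil. Qed.

Lemma Ddiff (t : int) (l a n : nat) :
  ((4 * a)%N%:Z %| (t ^+ 2 - 4 * l%:Z * (n %% a)%N%:Z) - (t ^+ 2 - 4 * l%:Z * n%:Z))%Z.
Proof.
have e : n%:Z = (n %/ a)%N%:Z * a%:Z + (n %% a)%N%:Z by rewrite -PoszM -PoszD -divn_eq.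
apply/dvdzP; exists (l%:Z * (n %/ a)%N%:Z); rewrite e PoszM; ring.
Qed.

Theorem lemma3p1 (l : nat) (t : int) :
  prime l -> odd l ->
  psit l t 1 = 1 /\
  (forall m1 m2 : nat, (0 < m1)%N -> (0 < m2)%N -> coprime m1 m2 ->
     psit l t (m1 * m2) = psit l t m1 * psit l t m2).
Proof.
move=> lp lo.
pose D (n : nat) := t ^+ 2 - 4 * l%:Z * n%:Z.
have D4' : forall n, (modz (D n) 4 == 0) || (modz (D n) 4 == 1).
  by move=> n; rewrite /D -mulrA; apply: D4.
pose G (m x : nat) : rat := if coprime x m then ((psi (D x) m)%:~R : rat) else 0.
have Sm : forall m, psit l t m = (totient (m * m))%:R^-1 * \sum_(x < m * m) G m x.
  by move=> m; rewrite /psit big_mkcond.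
split.
  rewrite Sm -(big_mkord xpredT (G 1%N)) (_ : (1 * 1 = 1)%N) // big_nat1 /G /= psi1.
  by rewrite (_ : totient 1 = 1%N) // invr1 mulr1.
move=> m1 m2 m10 m20 co.
rewrite !Sm.
have eN : (m1 * m2 * (m1 * m2) = m1 * m1 * (m2 * m2))%N by rewrite mulnACA.
have coa : coprime (m1 * m1) (m2 * m2) by rewrite coprimeMl !coprimeMr co.
have a0 : (0 < m1 * m1)%N by rewrite muln_gt0 m10.
have b0 : (0 < m2 * m2)%N by rewrite muln_gt0 m20.
rewrite eN totient_coprime // natrM invfM.
rewrite (eq_bigr (fun n : 'I_(m1 * m1 * (m2 * m2)) => G m1 (n %% (m1 * m1))%N * G m2 (n %% (m2 * m2))%N)); last first.
  move=> n _; rewrite /G coprimeMr !coprime_modsq.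
  case: (coprime n m1) => /=; last by rewrite mul0r.
  case: (coprime n m2) => /=; last by rewrite mulr0.
  rewrite psiM //; last exact: disc_ok.
  have e1 : psi (D n) m1 = psi (D (n %% (m1 * m1))%N) m1.
    by apply: psi_per => //; apply: Ddiff.
  have e2 : psi (D n) m2 = psi (D (n %% (m2 * m2))%N) m2.
    by apply: psi_per => //; apply: Ddiff.
  by rewrite e1 e2 intrM.
have := crt_sum (fun x y => G m1 x * G m2 y) coa a0 b0.
rewrite /= => ->.
by rewrite -big_distrlr /= mulrACA.
Qed.
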